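(* Let $G$ be the group of affine transformations $T_{a,b}:x\mapsto ax+b$ of $\mathbb{Z}/8\mathbb{Z}$ ($a\in(\mathbb{Z}/8\mathbb{Z})^\times$, $b\in\mathbb{Z}/8\mathbb{Z}$), let $U_1=\langle T_{a,0}:a\in(\mathbb{Z}/8\mathbb{Z})^\times\rangle$, $U_2=\langle T_{-1,0},T_{3,4}\rangle$, and $\Theta=U_1-U_2$ (a $G$-relation). Let $\rho$ be an irreducible $\mathbb{Q}[G]$-representation. Then $\mathcal{C}_\Theta(\rho)\equiv2\pmod{(\mathbb{Q}^\times)^2}$ if $\rho\cong I$, and $\mathcal{C}_\Theta(\rho)\equiv1\pmod{(\mathbb{Q}^\times)^2}$ otherwise.
   Context: Let $N=\langle T_{1,b}:b\in\mathbb{Z}/8\mathbb{Z}\rangle$ and $\chi$ a faithful one-dimensional complex character of $N$; $I=\mathrm{Ind}_N^G\chi$ is a $4$-dimensional irreducible representation, realisable over $\mathbb{Q}$ and independent of the choice of $\chi$, regarded as an irreducible $\mathbb{Q}[G]$-representation. A $G$-relation is a formal integer combination $\sum_jn_jV_j$ of subgroups with $\bigoplus_{n_j>0}\mathbb{Q}[G/V_j]^{n_j}\cong\bigoplus_{n_j<0}\mathbb{Q}[G/V_j]^{-n_j}$; for a $\mathbb{Q}[G]$-module $A$ with any $G$-invariant non-degenerate $\mathbb{Q}$-bilinear pairing, $\mathcal{C}_\Theta(A)=\prod_j\det(\tfrac1{\#V_j}\langle\cdot,\cdot\rangle\mid A^{V_j})^{n_j}\in\mathbb{Q}^\times/(\mathbb{Q}^\times)^2$,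 independent of the pairing. *)

(* Defs.v *)
From HB Require Import structures.
From mathcomp Require Import all_boot all_order all_algebra all_fingroup all_solvable all_field all_character.
Set Implicit Arguments. Unset Strict Implicit. Unset Printing Implicit Defensive.
Import Order.TTheory GRing.Theory Num.Theory.
Local Open Scope ring_scope.
Local Open Scope group_scope.

Notation Z8 := 'Z_8.

Definition affine_set : {set {perm Z8}} :=
  [set s : {perm Z8} | [exists a : Z8, exists b : Z8,
     (a \is a GRing.unit) && [forall x : Z8, s x == (a * x + b)%R]]].

Lemma affine_group_set : group_set affine_set.
Proof.
apply/group_setP; split.
  rewrite inE; apply/existsP; exists 1%R; apply/existsP; exists 0%R.
  rewrite unitr1 /=; apply/forallP => x; by rewrite perm1 mul1r addr0.
move=> s t; rewrite !inE => /existsP[a /existsP[b /andP[ua /forallP sa]]].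
move=> /existsP[c /existsP[d /andP[uc /forallP tc]]].
apply/existsP; exists (c * a)%R; apply/existsP; exists (c * b + d)%R.
rewrite unitrM uc ua /=; apply/forallP => x.
by rewrite permM (eqP (sa x)) (eqP (tc _)) mulrDr addrA mulrA.
Qed.

Canonical G_group := Group affine_group_set.
Definition G : {group {perm Z8}} := G_group.

Definition U1 : {group {perm Z8}} :=
  <<[set s : {perm Z8} | [exists a : Z8,
      (a \is a GRing.unit) && [forall x : Z8, s x == (a * x)%R]]]>>%G.

Definition U2 : {group {perm Z8}} :=
  <<[set s : {perm Z8} | [forall x : Z8, s x == (- x)%R]
                      || [forall x : Z8, s x == (3 * x + 4)%R]]>>%G.

Definition N : {group {perm Z8}} :=
  <<[set s : {perm Z8} | [exists b : Z8, [forall x : Z8, s x == (x + b)%R]]]>>%G.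

(* The factor det( (1/#V) <.,.> | A^V ) of C_Theta, for the rational
   representation rho (acting on row vectors) and the pairing
   <v,w> = v *m B *m w^T; the basis of A^V is row_base (rfix_mx rho V). *)
Definition C_factor n (rho : mx_representation rat G n) (B : 'M[rat]_n)
    (V : {set {perm Z8}}) : rat :=
  let P := row_base (rfix_mx rho V) in
  \det ((#|V|%:R)^-1 *: (P *m B *m P^T)).

Definition C_Theta n (rho : mx_representation rat G n) (B : 'M[rat]_n) : rat :=
  (C_factor rho B U1 / C_factor rho B U2)%R.

Local Close Scope group_scope.

Definition sq_class_eq (x c : rat) : Prop :=
  exists q : rat, q != 0 /\ x = c * q ^+ 2.

Definition G_invariant_pairing n (rho : mx_representation rat G n) (B : 'M[rat]_n) :=
  forall g, g \in G -> rho g *m B *m (rho g)^T = B.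

(* rho is isomorphic to I = Ind_N^G chi, chi a faithful linear character of N:
   the character of rho (extended to algC) is Ind_N^G chi. *)
Definition iso_I n (rho : mx_representation rat G n) : Prop :=
  exists chi : 'CF(N), [/\ chi \is a linear_char, cfaithful chi &
     cfRepr (map_repr ratr rho) = 'Ind[G] chi].

(* Main.v *)
Require Import Defs.
From HB Require Import structures.
From mathcomp Require Import all_boot all_order all_algebra all_fingroup all_solvable all_field all_character.
From mathcomp Require Import zify ring lra.
Set Implicit Arguments. Unset Strict Implicit. Unset Printing Implicit Defensive.
Import Order.TTheory GRing.Theory Num.Theory.
Local Open Scope ring_scope.
Lemma unitZ8 (a : nat) : ((a%:R : 'Z_8) \is a GRing.unit) = odd a.
Proof.
rewrite unitZpE // -coprime2n.
by rewrite (_ : 8 = 2 ^ 3)%N // coprime_pexpl.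
Qed.

Definition affF (a b : Z8) (x : Z8) : Z8 :=
  if a \is a GRing.unit then a * x + b else x.

Lemma affF_inj a b : injective (affF a b).
Proof.
move=> x y; rewrite /affF; case: ifP => ua //.
by move/addIr/(mulrI ua).
Qed.

Definition aff a b : {perm Z8} := perm (@affF_inj a b).
Definition T (a b : nat) : {perm Z8} := aff a%:R b%:R.

Lemma TE a b x : odd a -> T a b x = a%:R * x + b%:R.
Proof. by move=> oa; rewrite permE /affF unitZ8 oa. Qed.

Lemma Z8mod n : (n%:R : Z8) = (n %% 8)%N%:R.
Proof. by rewrite Zp_nat_mod. Qed.

Lemma Tmod a b : T a b = T (a %% 8)%N (b %% 8)%N.
Proof. by rewrite /T -!Z8mod. Qed.

Lemma Tmul a b c d : odd a -> odd c ->
  (T a b * T c d)%g = T (a * c)%N (b * c + d)%N.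
Proof.
move=> oa oc; apply/permP => x.
rewrite permM !TE ?oddM ?oa ?oc // natrM natrD natrM.
by rewrite mulrDr mulrA [c%:R * a%:R]mulrC [c%:R * b%:R]mulrC addrA.
Qed.

Lemma T10 : T 1 0 = 1%g.
Proof. by apply/permP => x; rewrite TE // perm1 mul1r addr0. Qed.

Lemma Z8eq m n : (m%:R : Z8) = n%:R -> (m %% 8 = n %% 8)%N.
Proof. by move=> /(congr1 val); rewrite /= !val_Zp_nat. Qed.

Lemma Tinj a b c d : odd a -> odd c -> T a b = T c d ->
  (a %% 8 = c %% 8 /\ b %% 8 = d %% 8)%N.
Proof.
move=> oa oc e.
have e0 := congr1 (fun s : {perm Z8} => s 0) e.
have e1 := congr1 (fun s : {perm Z8} => s 1) e.
rewrite /= !TE // !mulr0 !add0r in e0 e1.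
rewrite !mulr1 -!natrD in e1.
have := Z8eq e0; have := Z8eq e1 => h1 h0; split => //.
by move: h1; rewrite -modnDm h0 modnDm => /eqP; rewrite eqn_modDr => /eqP.
Qed.

Lemma TinG a b : odd a -> T a b \in G.
Proof.
move=> oa; rewrite inE; apply/existsP; exists a%:R; apply/existsP; exists b%:R.
by rewrite unitZ8 oa /=; apply/forallP => x; rewrite TE.
Qed.

Lemma G_T g : g \in G -> exists a b, [/\ odd a, a < 8, b < 8 & g = T a b]%N.
Proof.
rewrite inE => /existsP[A /existsP[B /andP[uA /forallP gE]]].
exists (val A), (val B); split; [| exact: ltn_ord | exact: ltn_ord |].
- by rewrite -unitZ8 natr_Zp.
- apply/permP => x; rewrite TE; last by rewrite -unitZ8 natr_Zp.
  by rewrite !natr_Zp (eqP (gE x)).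
Qed.

Lemma Z8_8 : (8%:R : Z8) = 0. Proof. by apply/eqP. Qed.

Lemma uniqT (s : seq (nat * nat)) : uniq s ->
  all (fun p => [&& odd p.1, p.1 < 8 & p.2 < 8]%N) s ->
  uniq [seq T p.1 p.2 | p <- s].
Proof.
move=> us /allP hs; rewrite map_inj_in_uniq // => [[a b] [c d]] /hs/and3P[oa la lb]
  /hs/and3P[oc lc ld] /= /Tinj[] // .
by rewrite !modn_small // => -> ->.
Qed.

Lemma card_list (A : {set {perm Z8}}) (s : seq {perm Z8}) :
  uniq s -> A =i s -> #|A| = size s.
Proof. by move=> us eA; rewrite (eq_card eA); apply/card_uniqP. Qed.

Definition Gpairs : seq (nat * nat) :=
  [seq p <- [seq (a, b) | a <- iota 0 8, b <- iota 0 8] | odd p.1].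

Lemma mem_Gpairs a b : ((a, b) \in Gpairs) = [&& odd a, a < 8 & b < 8]%N.
Proof.
rewrite mem_filter -[(a, b).1]/a; case: (odd a) => //.
apply/idP/idP.
  move/seq.allpairsP => -[[x y] [hx hy [-> ->]]]; move: hx hy.
  by rewrite !mem_iota !add0n => /andP[_ ->] /andP[_ ->].
by case/and3P => _ ha hb; apply: allpairs_f; rewrite mem_iota.
Qed.

Lemma G_list : G =i [seq T p.1 p.2 | p <- Gpairs].
Proof.
move=> g; apply/idP/mapP.
  case/G_T => a [b [oa la lb ->]]; exists (a, b) => //.
  by rewrite mem_Gpairs oa la lb.
by case=> -[a b]; rewrite mem_Gpairs => /and3P[oa _ _] ->; apply: TinG.
Qed.

Lemma card_G : #|G| = 32%N.
Proof.
rewrite (card_list _ G_list) ?size_map //.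
apply: uniqT; first by [].
by apply/allP => -[a b]; rewrite mem_Gpairs.
Qed.

Definition S1 : {set {perm Z8}} := [set s : {perm Z8} | [exists a : Z8,
      (a \is a GRing.unit) && [forall x : Z8, s x == (a * x)%R]]].

Lemma S1_group : group_set S1.
Proof.
apply/group_setP; split.
  rewrite inE; apply/existsP; exists 1%R.
  by rewrite unitr1 /=; apply/forallP => x; rewrite perm1 mul1r.
move=> s t; rewrite !inE => /existsP[a /andP[ua /forallP sa]].
move=> /existsP[c /andP[uc /forallP tc]].
apply/existsP; exists (c * a)%R.
rewrite unitrM uc ua /=; apply/forallP => x.
by rewrite permM (eqP (sa x)) (eqP (tc _)) mulrA.
Qed.

Lemma U1_S1 : (U1 : {set _}) = S1.
Proof. by rewrite /U1 /= gen_set_id //; apply: S1_group. Qed.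

Lemma TU1 a : odd a -> T a 0 \in U1.
Proof.
move=> oa; rewrite U1_S1 inE; apply/existsP; exists a%:R.
by rewrite unitZ8 oa /=; apply/forallP => x; rewrite TE // addr0.
Qed.

Lemma U1_T u : u \in U1 -> exists a, [/\ odd a, (a < 8)%N & u = T a 0].
Proof.
rewrite U1_S1 inE => /existsP[A /andP[uA /forallP gE]].
have oA : odd (val A) by rewrite -unitZ8 natr_Zp.
exists (val A); split => //; first exact: ltn_ord.
by apply/permP => x; rewrite TE // natr_Zp addr0 (eqP (gE x)).
Qed.

Definition U1pairs : seq (nat * nat) := [:: (1,0); (3,0); (5,0); (7,0)]%N.

Lemma U1_list : U1 =i [seq T p.1 p.2 | p <- U1pairs].
Proof.
move=> u; apply/idP/mapP.
  case/U1_T => a [oa la ->]; exists (a, 0%N) => //.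
  have : all (fun a => odd a ==> ((a, 0%N) \in U1pairs)) (iota 0 8) by [].
  by move/allP/(_ a); rewrite mem_iota la oa => /(_ isT).
by case=> -[a b]; rewrite !inE => /or4P[]/eqP[-> ->] ->; apply: TU1.
Qed.

Lemma card_U1 : #|U1| = 4%N.
Proof. by rewrite (card_list _ U1_list) ?size_map //; apply: uniqT. Qed.

Definition U2pairs : seq (nat * nat) := [:: (1,0); (7,0); (3,4); (5,4)]%N.
Definition K2 : {set {perm Z8}} := [set u in [seq T p.1 p.2 | p <- U2pairs]].

Lemma inK2 a b : ((a %% 8, b %% 8)%N \in U2pairs) -> T a b \in K2.
Proof.
rewrite Tmod; move: (a %% 8)%N (b %% 8)%N => a' b' h.
by rewrite inE; apply/mapP; exists (a', b').
Qed.

Lemma K2_T u : u \in K2 -> exists a b, ((a, b) \in U2pairs) /\ u = T a b.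
Proof. by rewrite inE => /mapP[[a b] h ->]; exists a, b. Qed.

Lemma K2_group : group_set K2.
Proof.
apply/group_setP; split; first by rewrite -T10 inE; apply/mapP; exists (1%N, 0%N).
move=> x y /K2_T[a [b [hab ->]]] /K2_T[c [d [hcd ->]]].
rewrite !inE in hab hcd.
by case/or4P: hab => /eqP[-> ->]; case/or4P: hcd => /eqP[-> ->];
  rewrite Tmul //; apply: inK2.
Qed.

Canonical K2_grp := Group K2_group.

Lemma T70E : T 7 0 = perm (@affF_inj (-1) 0).
Proof.
apply/permP => x; rewrite TE // !permE /affF unitrN1 mulN1r addr0.
rewrite addr0; apply/eqP; rewrite -subr_eq0 opprK -{2}[x]mul1r -mulrDl.
by rewrite (_ : 7%:R + 1 = 0 :> Z8) ?mul0r //; apply/eqP.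
Qed.

Lemma S2T s : (s \in [set s : {perm Z8} | [forall x : Z8, s x == (- x)%R]
                      || [forall x : Z8, s x == (3 * x + 4)%R]])
   = (s == T 7 0) || (s == T 3 4).
Proof.
rewrite inE; congr (_ || _); apply/forallP/eqP.
- by move=> h; apply/permP => x; rewrite T70E permE /affF unitrN1 mulN1r addr0 (eqP (h x)).
- by move=> -> x; rewrite T70E permE /affF unitrN1 mulN1r addr0.
- by move=> h; apply/permP => x; rewrite TE // (eqP (h x)).
- by move=> -> x; rewrite TE.
Qed.

Lemma U2_K2 : U2 =i K2.
Proof.
apply/setP/eqP; rewrite eqEsubset; apply/andP; split.
  rewrite /U2 /= gen_subG; apply/subsetP => s; rewrite S2T => /orP[]/eqP->;
  by apply: inK2.
apply/subsetP => u /K2_T[a [b [h ->]]].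
have g1 : T 7 0 \in U2 by apply: mem_gen; rewrite S2T eqxx.
have g2 : T 3 4 \in U2 by apply: mem_gen; rewrite S2T eqxx orbT.
move: h; rewrite !inE => /or4P[]/eqP[-> ->] //; first by rewrite T10 group1.
have -> : T 5 4 = (T 7 0 * T 3 4)%g by rewrite Tmul // [RHS]Tmod.
by apply: groupM.
Qed.

Lemma U2_list : U2 =i [seq T p.1 p.2 | p <- U2pairs].
Proof. by move=> u; rewrite U2_K2 inE. Qed.

Lemma card_U2 : #|U2| = 4%N.
Proof. by rewrite (card_list _ U2_list) ?size_map //; apply: uniqT. Qed.

Definition SN : {set {perm Z8}} :=
  [set s : {perm Z8} | [exists b : Z8, [forall x : Z8, s x == (x + b)%R]]].

Lemma SN_group : group_set SN.
Proof.
apply/group_setP; split.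
  rewrite inE; apply/existsP; exists 0%R.
  by apply/forallP => x; rewrite perm1 addr0.
move=> s t; rewrite !inE => /existsP[a /forallP sa] /existsP[c /forallP tc].
apply/existsP; exists (a + c)%R; apply/forallP => x.
by rewrite permM (eqP (sa x)) (eqP (tc _)) addrA.
Qed.

Lemma N_SN : (N : {set _}) = SN.
Proof. by rewrite /N /= gen_set_id //; apply: SN_group. Qed.

Lemma TN b : T 1 b \in N.
Proof.
rewrite N_SN inE; apply/existsP; exists b%:R.
by apply/forallP => x; rewrite TE // mul1r.
Qed.

Lemma N_T u : u \in N -> exists b, (b < 8)%N /\ u = T 1 b.
Proof.
rewrite N_SN inE => /existsP[B /forallP gE].
exists (val B); split; first exact: ltn_ord.
by apply/permP => x; rewrite TE // natr_Zp mul1r (eqP (gE x)).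
Qed.

Definition Npairs : seq (nat * nat) := [seq (1%N, b) | b <- iota 0 8].

Lemma N_list : N =i [seq T p.1 p.2 | p <- Npairs].
Proof.
move=> u; apply/idP/mapP.
  by case/N_T => b [lb ->]; exists (1%N, b) => //; apply/mapP; exists b; rewrite ?mem_iota.
by case=> -[a b] /mapP[c _ [-> ->]] ->; apply: TN.
Qed.

Lemma card_N : #|N| = 8%N.
Proof. by rewrite (card_list _ N_list) ?size_map //; apply: uniqT. Qed.

Lemma NsubG : N \subset G.
Proof. by apply/subsetP => u /N_T[b [_ ->]]; apply: TinG. Qed.

Lemma index_GN : #|G : N|%g = 4%N.
Proof.
have := Lagrange NsubG; rewrite card_G card_N => h.
by apply/eqP; rewrite -(eqn_pmul2l (isT : 0 < 8)%N) h.
Qed.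

Lemma odd_sq8 a : odd a -> ((a * a) %% 8 = 1)%N.
Proof.
move=> oa; rewrite -modnMm.
have : odd (a %% 8) by rewrite odd_mod.
have : (a %% 8 < 8)%N by rewrite ltn_mod.
by move: (a %% 8)%N => k; do 8?[case: k => [|k] //].
Qed.

Definition Tinvb (a b : nat) : nat := ((8 - b %% 8) * a)%N.

Lemma Tinv a b : odd a -> ((T a b)^-1)%g = T a (Tinvb a b).
Proof.
move=> oa; apply/eqP; rewrite eq_invg_mul Tmul // Tmod odd_sq8 //.
rewrite /Tinvb -mulnDl -modnMml -modnDml subnKC ?modnn ?mod0n ?T10 //.
by apply: ltnW; rewrite ltn_mod.
Qed.

Section Rep.
Variables (n : nat) (rho : mx_representation rat G n).

Definition R (a b : nat) : 'M[rat]_n := rho (T a b).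

Lemma Rmod a b : R a b = R (a %% 8)%N (b %% 8)%N.
Proof. by rewrite /R Tmod. Qed.

Lemma RM a b c d : odd a -> odd c -> R a b *m R c d = R (a * c)%N (b * c + d)%N.
Proof. by move=> oa oc; rewrite /R -repr_mxM ?TinG // Tmul. Qed.

Lemma R10 : R 1 0 = 1%:M.
Proof. by rewrite /R T10 repr_mx1. Qed.

Definition elt := seq (int * (nat * nat)).

Definition ev (l : elt) : 'M[rat]_n :=
  \sum_(p <- l) ((p.1)%:~R : rat) *: R p.2.1 p.2.2.

Definition pr (p q : int * (nat * nat)) : int * (nat * nat) :=
  ((p.1 * q.1)%R, ((p.2.1 * q.2.1)%N, (p.2.2 * q.2.1 + q.2.2)%N)).

Definition mulL (l1 l2 : elt) : elt := flatten [seq [seq pr p q | q <- l2] | p <- l1].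

Definition oddl (l : elt) := all (fun p => odd p.2.1) l.

Lemma ev_cons p l : ev (p :: l) = ((p.1)%:~R : rat) *: R p.2.1 p.2.2 + ev l.
Proof. by rewrite /ev big_cons. Qed.

Lemma ev_cat l1 l2 : ev (l1 ++ l2) = ev l1 + ev l2.
Proof. by rewrite /ev big_cat. Qed.

Lemma ev_nil : ev [::] = 0.
Proof. by rewrite /ev big_nil. Qed.

Lemma ev_mul l1 l2 : oddl l1 -> oddl l2 -> ev l1 *m ev l2 = ev (mulL l1 l2).
Proof.
move=> o1 o2; elim: l1 o1 => [|p l1 IH] /=; first by rewrite ev_nil mul0mx.
case/andP=> op o1; rewrite ev_cat -IH // ev_cons mulmxDl; congr (_ + _).
elim: l2 o2 {IH} => [|q l2 IH2] /=; first by rewrite ev_nil mulmx0.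
case/andP=> oq o2; rewrite !ev_cons -IH2 // mulmxDr; congr (_ + _).
by rewrite -scalemxAl -scalemxAr scalerA RM // /pr /= intrM.
Qed.

Definition idx (a b : nat) : nat := ((a %% 8) * 8 + b %% 8)%N.
Definition incr (v : seq int) (i : nat) (c : int) := set_nth 0%R v i (nth 0%R v i + c)%R.
Definition nf (l : elt) : seq int :=
  foldr (fun p v => incr v (idx p.2.1 p.2.2) p.1) (nseq 64 0%R) l.
Definition evnf (v : seq int) : 'M[rat]_n :=
  \sum_(i < 64) ((nth 0%R v i)%:~R : rat) *: R (i %/ 8)%N (i %% 8)%N.

Lemma idx_lt a b : (idx a b < 64)%N.
Proof.
rewrite /idx; have := ltn_mod a 8; have := ltn_mod b 8.
move: (a %% 8)%N (b %% 8)%N => x y /= hy hx; lia.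
Qed.

Lemma idx_R a b : R (idx a b %/ 8)%N (idx a b %% 8)%N = R a b.
Proof.
rewrite /idx divnMDl // modnMDl divn_small ?ltn_mod // addn0 modn_mod.
by rewrite [RHS]Rmod.
Qed.

Lemma evnf_incr v a b c :
  evnf (incr v (idx a b) c) = evnf v + (c%:~R : rat) *: R a b.
Proof.
rewrite /evnf /incr (bigD1 (Ordinal (idx_lt a b))) //= [in RHS](bigD1 (Ordinal (idx_lt a b))) //=.
rewrite nth_set_nth /= eqxx intrD scalerDl idx_R [RHS]addrAC.
congr (_ + _); apply: eq_bigr => i hi; rewrite nth_set_nth /=.
by rewrite ifN //; apply: contra hi => /eqP e; apply/eqP/val_inj.
Qed.

Lemma ev_nf l : ev l = evnf (nf l).
Proof.
elim: l => [|p l IH].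
  rewrite ev_nil /evnf big1 // => i _; rewrite nth_nseq; case: ifP => _; by rewrite scale0r.
by rewrite ev_cons /= evnf_incr IH addrC.
Qed.

Lemma ev_eq l1 l2 : nf l1 = nf l2 -> ev l1 = ev l2.
Proof. by rewrite !ev_nf => ->. Qed.

Lemma ev1 l a b : oddl l -> odd a -> ev l *m R a b = ev (mulL l [:: (1%R, (a, b))]).
Proof.
move=> ol oa; have -> : R a b = ev [:: (1%R, (a, b))] by rewrite ev_cons ev_nil addr0 scale1r.
by rewrite ev_mul //= oa.
Qed.

End Rep.

Definition pm (b : nat) : int := if (b == 3%N) || (b == 5%N) then 1%R else (-1)%R.
Definition lx : elt :=
  [seq (pm p.2, p) | p <- [seq (a, b) | a <- [:: 1; 3; 5; 7]%N, b <- [:: 0; 1; 3; 4; 5; 7]%N]].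
Definition starL (l : elt) : elt := [seq (p.1, (p.2.1, Tinvb p.2.1 p.2.2)) | p <- l].
Definition lxs := starL lx.
Definition lE1 : elt := [seq (1%R, p) | p <- U1pairs].
Definition lE2 : elt := [seq (1%R, p) | p <- U2pairs].
Definition lZ : elt := [:: (24%:Z, (1, 0)%N); ((-8)%R, (1, 4)%N)].

Lemma nf_I0 : nf (mulL lx lxs) = nf (mulL lE1 lZ).
Proof. by vm_compute. Qed.
Lemma nf_I3 : nf (mulL lxs lx) = nf (mulL lE2 lZ).
Proof. by vm_compute. Qed.
Lemma nf_I1 : all (fun p => nf (mulL lx [:: (1%R, p)]) == nf lx) U2pairs.
Proof. by vm_compute. Qed.
Lemma nf_I2 : all (fun p => nf (mulL lxs [:: (1%R, p)]) == nf lxs) U1pairs.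
Proof. by vm_compute. Qed.
Lemma nf_I4 : all (fun p => nf (mulL lE2 [:: (1%R, p)]) == nf lE2) U2pairs.
Proof. by vm_compute. Qed.
Lemma nf_I4s : nf (starL lE2) = nf lE2.
Proof. by vm_compute. Qed.
Lemma nf_I5 : all (fun p => nf (mulL lE1 [:: (1%R, p)]) == nf lE1) U1pairs.
Proof. by vm_compute. Qed.
Lemma nf_I6 : nf (mulL lE1 lE1) = nf [seq (4%:Z, p) | p <- U1pairs].
Proof. by vm_compute. Qed.

Lemma gram_sq (m : nat) (K G1 G2 : 'M[rat]_m) (lam s : rat) :
  lam != 0 -> s != 0 -> \det K != 0 -> \det G2 != 0 ->
  K *m G2 *m K^T = lam *: G1 ->
  exists q : rat, q != 0 /\ \det (s *: G1) / \det (s *: G2) = lam ^+ m * q ^+ 2.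
Proof.
move=> l0 s0 K0 G0 e.
have eG1 : G1 = lam^-1 *: (K *m G2 *m K^T) by rewrite e scalerA mulVf ?scale1r.
exists (\det K / lam ^+ m); split.
  by rewrite mulf_neq0 ?invr_eq0 ?expf_neq0.
rewrite eG1 !detZ !det_mulmx det_tr exprVn.
have sm : s ^+ m != 0 by rewrite expf_neq0.
have lm : lam ^+ m != 0 by rewrite expf_neq0.
field; rewrite ?sm ?lm ?G0 //.
Qed.

Lemma gram (n d1 d2 : nat) (P1 : 'M[rat]_(d1, n)) (P2 : 'M[rat]_(d2, n))
    (B X Xs : 'M[rat]_n) (lam s : rat) :
  row_free P1 -> row_free P2 -> lam != 0 -> s != 0 ->
  (P1 *m X <= P2)%MS -> (P2 *m Xs <= P1)%MS ->
  P1 *m X *m Xs = lam *: P1 -> P2 *m Xs *m X = lam *: P2 ->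
  B *m X^T = Xs *m B ->
  \det (P2 *m B *m P2^T) != 0 ->
  d1 = d2 /\ exists q : rat, q != 0 /\
    \det (s *: (P1 *m B *m P1^T)) / \det (s *: (P2 *m B *m P2^T)) = lam ^+ d1 * q ^+ 2.
Proof.
move=> f1 f2 l0 s0 sX sXs e1 e2 eB G0.
set K := P1 *m X *m pinvmx P2.
set L := P2 *m Xs *m pinvmx P1.
have eK : P1 *m X = K *m P2 by rewrite mulmxKpV.
have eL : P2 *m Xs = L *m P1 by rewrite mulmxKpV.
have KL : K *m L = lam%:M.
  by apply: (row_free_inj f1); rewrite -mulmxA -eL mulmxA -eK e1 mul_scalar_mx.
have LK : L *m K = lam%:M.
  by apply: (row_free_inj f2); rewrite -mulmxA -eK mulmxA -eL e2 mul_scalar_mx.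
have le12 : (d1 <= d2)%N.
  apply: leq_trans (rank_leq_col K).
  apply: (@mulmx1_min_rank _ d1 d1 d2 K 1%:M (lam^-1 *: L)).
  by rewrite mul1mx -scalemxAr KL scale_scalar_mx mulVf.
have le21 : (d2 <= d1)%N.
  apply: leq_trans (rank_leq_col L).
  apply: (@mulmx1_min_rank _ d2 d2 d1 L 1%:M (lam^-1 *: K)).
  by rewrite mul1mx -scalemxAr LK scale_scalar_mx mulVf.
have e12 : d1 = d2 by apply/eqP; rewrite eqn_leq le12 le21.
split => //.
move: K L eK eL KL LK G0; clear le12 le21 sX sXs e2 f2.
subst d2 => K L eK eL KL LK G0.
apply: (gram_sq (K:=K)) => //.
  have : \det (K *m L) != 0 by rewrite KL det_scalar expf_neq0.
  by rewrite det_mulmx mulf_eq0 negb_or => /andP[].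
rewrite !mulmxA -eK -!mulmxA -trmx_mul -eK trmx_mul (mulmxA B) eB.
by rewrite !mulmxA e1 -!scalemxAl.
Qed.

Lemma nondeg (n d : nat) (P : 'M[rat]_(d, n)) (B E : 'M[rat]_n) (c : rat) :
  row_free P -> B \in unitmx -> c != 0 -> (E <= P)%MS ->
  P *m E = c *: P -> B *m E^T = E *m B ->
  \det (P *m B *m P^T) != 0.
Proof.
move=> fP uB c0 sE eE eB.
have : row_free (P *m B *m P^T); last by rewrite row_free_unit unitmxE unitfE.
rewrite -kermx_eq0; apply/eqP.
set W := kermx _; have hW : W *m (P *m B *m P^T) = 0 by apply: mulmx_ker.
set F := E *m pinvmx P; have eF : E = F *m P by rewrite mulmxKpV.
have h1 : W *m P *m B *m E^T = 0.
  by rewrite eF trmx_mul !mulmxA -(mulmxA W) -(mulmxA W) hW mul0mx.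
have h2 : W *m P *m B = 0.
  move: h1; rewrite -mulmxA eB mulmxA -(mulmxA W) eE -scalemxAr -scalemxAl.
  by move/eqP; rewrite scaler_eq0 (negbTE c0) /= => /eqP.
have h3 : W *m P = 0 by rewrite -(mulmxK uB (W *m P)) h2 mul0mx.
by apply: (row_free_inj fP); rewrite h3 mul0mx.
Qed.

Section Rep2.
Variables (n : nat) (rho : mx_representation rat G n).
Local Notation R := (R rho).
Local Notation ev := (ev rho).

Lemma oddl_lx : oddl lx. Proof. by []. Qed.
Lemma oddl_lxs : oddl lxs. Proof. by []. Qed.
Lemma oddl_lE1 : oddl lE1. Proof. by []. Qed.
Lemma oddl_lE2 : oddl lE2. Proof. by []. Qed.
Lemma oddl_lZ : oddl lZ. Proof. by []. Qed.

Lemma ev_fix (l : elt) (s : seq (nat * nat)) : oddl l -> all (fun p => odd p.1) s ->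
  all (fun p => nf (mulL l [:: (1%R, p)]) == nf l) s ->
  forall p, p \in s -> ev l *m R p.1 p.2 = ev l.
Proof.
move=> ol os /allP h [a b] ps; rewrite ev1 //; last by move/allP: os => /(_ _ ps).
by apply: ev_eq; apply/eqP; apply: h.
Qed.

Lemma rfixU1P m (P : 'M_(m, n)) :
  (P <= rfix_mx rho U1)%MS <-> (forall p, p \in U1pairs -> P *m R p.1 p.2 = P).
Proof.
split.
  by move/rfix_mxP => h p hp; apply: h; rewrite U1_list; apply/mapP; exists p.
move=> h; apply/rfix_mxP => x; rewrite U1_list => /mapP[p hp ->]; exact: h.
Qed.

Lemma rfixU2P m (P : 'M_(m, n)) :
  (P <= rfix_mx rho U2)%MS <-> (forall p, p \in U2pairs -> P *m R p.1 p.2 = P).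
Proof.
split.
  by move/rfix_mxP => h p hp; apply: h; rewrite U2_list; apply/mapP; exists p.
move=> h; apply/rfix_mxP => x; rewrite U2_list => /mapP[p hp ->]; exact: h.
Qed.

Lemma ev_const m (P : 'M_(m, n)) (s : seq (nat * nat)) :
  (forall p, p \in s -> P *m R p.1 p.2 = P) ->
  P *m ev [seq (1%R, p) | p <- s] = (size s)%:R *: P.
Proof.
elim: s => [|p s IH] h /=; first by rewrite ev_nil mulmx0 scale0r.
rewrite ev_cons mulmxDr IH => [|q hq]; last by apply: h; rewrite inE hq orbT.
rewrite /= scale1r h ?inE ?eqxx //.
by rewrite -{1}[P]scale1r -scalerDl -natr1 addrC.
Qed.

Lemma ev_lZ : ev lZ = (24%:Z)%:~R *: 1%:M + ((-8)%R : int)%:~R *: R 1 4.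
Proof. by rewrite /lZ !ev_cons ev_nil /= addr0 (R10 rho). Qed.

Lemma Z2 : R 1 4 *m R 1 4 = 1%:M.
Proof. by rewrite RM // Rmod /= -(R10 rho). Qed.

Lemma Zcent a b : odd a -> R 1 4 *m R a b = R a b *m R 1 4.
Proof.
move=> oa; rewrite !RM // Rmod [RHS]Rmod; congr (R _ _) => //.
  by rewrite mul1n muln1.
have := odd_double_half a; rewrite oa; lia.
Qed.

Lemma Zsign : mx_irreducible rho -> R 1 4 = 1%:M \/ R 1 4 = - 1%:M.
Proof.
move=> irr; set Z := R 1 4.
have cZ : centgmx rho (Z - 1%:M).
  apply/centgmxP => x /G_T[a [b [oa _ _ ->]]].
  by rewrite mulmxBl mulmxBr Zcent // mul1mx mulmx1.
have [e|ne] := eqVneq (Z - 1%:M) 0; first by left; apply: subr0_eq.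
right; have u := mx_Schur irr cZ ne.
have : (Z - 1%:M) *m (Z + 1%:M) = 0.
  by rewrite mulmxBl !mulmxDr Z2 mulmx1 !mul1mx [1%:M + _]addrC subrr.
move/(congr1 (mulmx (invmx (Z - 1%:M)))); rewrite mulmxA mulVmx // mul1mx mulmx0.
by move/eqP; rewrite addr_eq0 => /eqP.
Qed.

Variable B : 'M[rat]_n.
Hypothesis hB : G_invariant_pairing rho B.

Lemma Radj a b : odd a -> B *m (R a b)^T = R a (Tinvb a b) *m B.
Proof.
move=> oa; have gG := TinG b oa.
have e := hB gG.
rewrite /R -Tinv // -{2}e !mulmxA -repr_mxM ?groupV // mulVg repr_mx1 mul1mx.
done.
Qed.

Lemma ev_adj l : oddl l -> B *m (ev l)^T = ev (starL l) *m B.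
Proof.
elim: l => [|p l IH] /=; first by rewrite !ev_nil trmx0 mulmx0 mul0mx.
case/andP=> op ol; rewrite !ev_cons linearD /= linearZ /= mulmxDr mulmxDl IH //.
by rewrite -scalemxAr Radj // scalemxAl.
Qed.

End Rep2.

Lemma sum_ltn (m r : nat) : (r <= m)%N -> (\sum_(i < m) (i < r : nat))%N = r.
Proof.
elim: m r => [|m IH] r; first by rewrite leqn0 => /eqP->; rewrite big_ord0.
rewrite big_ord_recr /= leq_eqVlt => /orP[/eqP->|lt].
  rewrite ltnSn addn1; congr (_.+1).
  rewrite -[RHS](IH m) //; apply: eq_bigr => i _.
  by rewrite ltn_ord ltnS ltnW.
by rewrite IH // ltnNge -ltnS lt addn0.
Qed.

Lemma tr_pid (m r : nat) : (r <= m)%N -> \tr (pid_mx r : 'M[rat]_m) = r%:R.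
Proof.
move=> le; rewrite /mxtrace (eq_bigr (fun i : 'I_m => ((i < r)%N)%:R)).
  by rewrite -natr_sum sum_ltn.
by move=> i _; rewrite mxE eqxx.
Qed.

Lemma tr_idem (m : nat) (P : 'M[rat]_m) : P *m P = P -> \tr P = (\rank P)%:R.
Proof.
move=> idP; have eP := mulmx_ebase P.
set L := col_ebase P in eP; set U := row_ebase P in eP; set r := \rank P in eP *.
have uL : L \in unitmx by apply: col_ebase_unit.
have uU : U \in unitmx by apply: row_ebase_unit.
have key : pid_mx r *m (U *m L) *m pid_mx r = pid_mx r :> 'M_m.
  have e2 : (L *m pid_mx r *m U) *m (L *m pid_mx r *m U) = L *m pid_mx r *m U.
    by rewrite eP idP.
  have : L *m (pid_mx r *m (U *m L) *m pid_mx r) *m U = L *m pid_mx r *m U.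
    by rewrite -[RHS]e2 !mulmxA.
  move/(congr1 (fun A => invmx L *m A *m invmx U)).
  by rewrite !mulmxA !mulVmx // !mul1mx -!mulmxA !mulmxV // !mulmx1.
have rm : (r <= m)%N by apply: rank_leq_row.
rewrite -eP -mulmxA mxtrace_mulC -mulmxA -{1}(pid_mx_id _ _ _ rm) -mulmxA.
by rewrite mxtrace_mulC key tr_pid.
Qed.

Local Open Scope nat_scope.
Definition wtable : bool :=
  all (fun a => all (fun b => ((a == 1) && ((b == 0) || (b == 4))) ||
    has (fun c => has (fun d => ((b * c + d) %% 8 == (d * a + b + 4) %% 8))
      (iota 0 8)) [:: 1; 3; 5; 7]) (iota 0 8)) [:: 1; 3; 5; 7].
Local Close Scope nat_scope.

Lemma wtable_ok : wtable. Proof. by vm_compute. Qed.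

Lemma odd8 a : odd a -> (a < 8)%N -> a \in [:: 1; 3; 5; 7]%N.
Proof.
move=> oa la.
have : all (fun a => odd a ==> (a \in [:: 1; 3; 5; 7]%N)) (iota 0 8) by [].
by move/allP/(_ a); rewrite mem_iota la oa => /(_ isT).
Qed.

Lemma conjw a b : odd a -> (a < 8)%N -> (b < 8)%N ->
  ~~ ((a == 1%N) && ((b == 0%N) || (b == 4%N))) ->
  exists c d, odd c /\ (T a b * T c d = T c d * T a b * T 1 4)%g.
Proof.
move=> oa la lb nab; have := wtable_ok.
move/allP/(_ a (odd8 oa la))/allP/(_ b); rewrite mem_iota lb => /(_ isT).
rewrite (negbTE nab) orFb => /hasP[c hc /hasP[d _ /eqP e]].
have oc : odd c by move: hc; rewrite !inE => /or4P[]/eqP->.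
exists c, d; split => //.
rewrite !Tmul ?oddM ?oa ?oc // Tmod [RHS]Tmod; congr (T _ _).
  by rewrite mulnC muln1.
by rewrite e muln1.
Qed.

Section Rep3.
Variables (n : nat) (rho : mx_representation rat G n).
Local Notation R := (R rho).
Local Notation ev := (ev rho).
Hypothesis hZ : R 1 4 = - 1%:M.

Lemma tr0 a b : odd a -> (a < 8)%N -> (b < 8)%N ->
  ~~ ((a == 1%N) && ((b == 0%N) || (b == 4%N))) -> \tr (R a b) = 0.
Proof.
move=> oa la lb nab; have [c [d [oc e]]] := conjw oa la lb nab.
have e' : R a b *m R c d = - (R c d *m R a b).
  rewrite /R -repr_mxM ?TinG // e !repr_mxM ?groupM ?TinG //.
  by rewrite -/(R 1 4) hZ mulmxN mulmx1.
have u : R c d \in unitmx by apply: repr_mx_unit; apply: TinG.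
have h : \tr (R a b) = - \tr (R a b).
  rewrite -{1}(mulmxK u (R a b)) e' mulNmx linearN; congr (- _).
  change (\tr (R c d *m R a b *m invmx (R c d)) = \tr (R a b)).
  by rewrite -mulmxA mxtrace_mulC mulmxKV.
lra.
Qed.

Lemma ev_scal (c : int) (s : seq (nat * nat)) :
  ev [seq (c, p) | p <- s] = (c%:~R : rat) *: ev [seq (1%R, p) | p <- s].
Proof.
elim: s => [|p s IH] /=; first by rewrite !ev_nil scaler0.
by rewrite !ev_cons IH scalerDr scale1r.
Qed.

Lemma d_eq : (\rank (rfix_mx rho U1))%:R = n%:R / 4 :> rat.
Proof.
set E := ev lE1; set P := (4 : rat)^-1 *: E.
have EE : E *m E = 4 *: E.
  by rewrite /E ev_mul // (ev_eq _ nf_I6) ev_scal.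
have PP : P *m P = P.
  rewrite /P -scalemxAl -scalemxAr EE !scalerA; congr (_ *: _).
have fE : forall p, p \in U1pairs -> E *m R p.1 p.2 = E.
  by apply: ev_fix => //; apply: nf_I5.
set F := rfix_mx rho U1.
have FE : F *m E = 4 *: F.
  by rewrite /E /lE1 ev_const //; apply/rfixU1P.
have eq : (P == F)%MS.
  apply/andP; split.
    by apply/rfixU1P => p hp; rewrite -scalemxAl fE.
  have -> : F = F *m P by rewrite /P -scalemxAr FE scalerA mulVf ?scale1r.
  exact: submxMl.
rewrite -(eqmx_rank eq) -tr_idem //.
rewrite /P mxtraceZ /E /lE1 /= !ev_cons ev_nil /= addr0 !mxtraceD !mxtraceZ.
rewrite (R10 rho) mxtrace1 !tr0 //.
by rewrite !mulr0 !addr0 mul1r mulrC.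
Qed.

Lemma n_le4 : mx_irreducible rho -> rfix_mx rho U1 != 0 -> (n <= 4)%N.
Proof.
move=> irr nz.
set v := nz_row (rfix_mx rho U1).
have v0 : v != 0 by rewrite nz_row_eq0.
have vfix : forall a, odd a -> v *m R a 0 = v.
  by move=> a oa; apply: (rfix_mxP U1 (nz_row_sub _)); apply: TU1.
set W : 'M_(4, n) := \matrix_(i < 4) (v *m R 1 i).
have claim : forall e, (v *m R 1 e <= W)%MS.
  move=> e; rewrite Rmod; have := ltn_mod e 8; move: (e %% 8)%N => k lk.
  case: (ltnP k 4) => hk.
    by rewrite (_ : v *m R 1 k = row (Ordinal hk) W) ?row_sub // rowK.
  have -> : R 1 k = - R 1 (k - 4) by rewrite -(mulmx1 (R 1 (k - 4))) -mulmxN -hZ RM // !muln1 subnK.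
  by rewrite mulmxN -scaleN1r scalemx_sub // (_ : v *m R 1 (k - 4) = row (@Ordinal 4 (k - 4) ltac:(lia)) W) ?row_sub // rowK.
have modW : mxmodule rho W.
  apply/mxmoduleP => x /G_T[a [b [oa _ _ ->]]].
  apply/row_subP => i; rewrite row_mul rowK -/(R a b) -mulmxA RM //.
  have -> : R (1 * a)%N (i * a + b)%N = R a 0 *m R 1 (i * a + b)%N.
    by rewrite RM // mul1n muln1 mul0n add0n.
  by rewrite mulmxA vfix.
have W0 : W != 0.
  apply: contra v0 => /eqP W0; apply/eqP.
  have := congr1 (row (0 : 'I_4)) W0; rewrite rowK (R10 rho) mulmx1 => ->.
  by rewrite row0.
have modW' : mxmodule rho <<W>>%MS.
  apply/mxmoduleP => x xG; rewrite (eqmxMr _ (genmxE W)) genmxE.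
  by move/mxmoduleP: modW => /(_ x xG).
have W0' : <<W>>%MS != 0 by rewrite -mxrank_eq0 mxrank_gen mxrank_eq0.
case/mx_irrP: irr => _ /(_ _ modW' W0'); rewrite /row_full mxrank_gen => /eqP <-.
exact: rank_leq_row.
Qed.

Lemma n4 : mx_irreducible rho -> n = 4%N /\ (\rank (rfix_mx rho U1) = 1)%N.
Proof.
move=> irr; have npos : (0 < n)%N by case/mx_irrP: irr.
have h := d_eq; set d := mxrank _ in h.
have e : (4 * d)%N = n.
  by apply/eqP; rewrite -(eqr_nat rat) natrM h; apply/eqP; field.
have nz : rfix_mx rho U1 != 0.
  rewrite -mxrank_eq0 -/d; apply/eqP => d0; move: e npos; rewrite d0; lia.
have := n_le4 irr nz; lia.
Qed.

End Rep3.

Definition z : {perm Z8} := T 1 4.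

Lemma zcomm a b : odd a -> (z * T a b = T a b * z)%g.
Proof.
move=> oa; rewrite /z !Tmul // Tmod [RHS]Tmod; congr (T _ _).
  by rewrite mul1n muln1.
have := odd_double_half a; rewrite oa; lia.
Qed.

Lemma z_central y : y \in G -> (z ^ y)%g = z.
Proof.
case/G_T => a [b [oa _ _ ->]].
by rewrite conjgE zcomm // mulgA mulVg mul1g.
Qed.

Lemma zN : z \in N. Proof. exact: TN. Qed.
Lemma zG : z \in G. Proof. exact: TinG. Qed.

Lemma zz : (z * z)%g = 1%g.
Proof. by rewrite /z Tmul // Tmod /= T10. Qed.

Lemma z_neq1 : z != 1%g.
Proof. by rewrite -T10; apply/eqP => /Tinj[]. Qed.

Section Chi.
Variable chi : 'CF(N).
Hypotheses (lin : chi \is a linear_char) (ff : cfaithful chi).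

Lemma chi_z : chi z = -1.
Proof.
have : chi z ^+ 2 = 1 by rewrite expr2 -lin_charM ?zN // zz lin_char1.
move/eqP; rewrite sqrf_eq1 => /orP[/eqP h|/eqP //].
have : z \in cfker chi.
  by rewrite cfkerEchar ?lin_charW // !inE h lin_char1 // eqxx andbT; apply: zN.
move/(subsetP ff); rewrite inE => /eqP e; by move: z_neq1; rewrite e eqxx.
Qed.

Lemma Ind_gz g : 'Ind[G] chi (g * z)%g = - 'Ind[G] chi g.
Proof.
rewrite !cfIndE ?NsubG // -mulrN -sumrN; congr (_ * _); apply: eq_bigr => y yG.
rewrite conjMg z_central //.
have [h|h] := boolP ((g ^ y)%g \in N).
  by rewrite lin_charM ?zN // chi_z mulrN1.
by rewrite !cfun0 ?oppr0 // groupMr ?zN.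
Qed.

Lemma Ind_1 : 'Ind[G] chi 1%g = 4.
Proof. by rewrite cfInd1 ?NsubG // index_GN lin_char1 //; apply: mulr1. Qed.

Lemma Ind_z : 'Ind[G] chi z = -4.
Proof. by rewrite -(mul1g z) Ind_gz Ind_1. Qed.

End Chi.

Lemma class_vanish (phi : 'CF(G)) :
  (forall g, g \in G -> phi (g * z)%g = - phi g) ->
  forall a b, odd a -> (a < 8)%N -> (b < 8)%N ->
  ~~ ((a == 1%N) && ((b == 0%N) || (b == 4%N))) -> phi (T a b) = 0.
Proof.
move=> hphi a b oa la lb nab; have [c [d [oc e]]] := conjw oa la lb nab.
have ej : ((T a b) ^ (T c d))%g = (T a b * z)%g.
  by rewrite conjgE e -!mulgA mulKg.
have h : phi (T a b) = - phi (T a b).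
  by rewrite -{1}(cfunJ _ _ (TinG d oc)) ej hphi // TinG.
have : phi (T a b) *+ 2 = 0 by rewrite mulr2n {1}h addNr.
by move/eqP; rewrite mulrn_eq0 /= => /eqP.
Qed.

Section CR.
Variables (n : nat) (rho : mx_representation rat G n).

Lemma crE g : g \in G -> cfRepr (map_repr ratr rho) g = ratr (\tr (rho g)).
Proof. by move=> gG; rewrite cfunE gG mulr1n /= trace_map_mx. Qed.

End CR.

Lemma Tpow b : (T 1 1 ^+ b)%g = T 1 b.
Proof.
elim: b => [|b IH]; first by rewrite expg0 T10.
by rewrite expgSr IH Tmul // mul1n muln1 addn1.
Qed.

Lemma N_cyclic : cyclic N.
Proof.
apply/cyclicP; exists (T 1 1); apply/eqP; rewrite eqEsubset cycle_subG TN andbT.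
by apply/subsetP => u /N_T[b [_ ->]]; rewrite -Tpow mem_cycle.
Qed.

Lemma exists_chi : exists chi : 'CF(N), chi \is a linear_char /\ cfaithful chi.
Proof.
have pN : (2.-group N)%g by rewrite /pgroup card_N.
have aN := cyclic_abelian N_cyclic.
have cZ : cyclic 'Z(N) by rewrite (center_idP aN) N_cyclic.
have [i fi] := pgroup_cyclic_faithful pN cZ.
by exists 'chi_i; split => //; move/char_abelianP: aN.
Qed.

Section Final.
Variables (n : nat) (rho : mx_representation rat G n) (B : 'M[rat]_n).
Hypotheses (Bu : B \in unitmx) (hB : G_invariant_pairing rho B).
Local Notation R := (R rho).
Local Notation ev := (ev rho).

Lemma C_gram (e : rat) : R 1 4 = e *: 1%:M -> (4 * (24 - 8 * e)) != 0 ->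
  exists q : rat, q != 0 /\
   C_Theta rho B = (4 * (24 - 8 * e)) ^+ \rank (rfix_mx rho U1) * q ^+ 2.
Proof.
move=> hZ l0; set lam := 4 * (24 - 8 * e).
set P1 := row_base (rfix_mx rho U1); set P2 := row_base (rfix_mx rho U2).
have f1 : row_free P1 by apply: row_base_free.
have f2 : row_free P2 by apply: row_base_free.
have hP1 : forall p, p \in U1pairs -> P1 *m R p.1 p.2 = P1.
  by apply/rfixU1P; rewrite eq_row_base.
have hP2 : forall p, p \in U2pairs -> P2 *m R p.1 p.2 = P2.
  by apply/rfixU2P; rewrite eq_row_base.
set X := ev lx; set Xs := ev lxs.
have eZ : ev lZ = (24 - 8 * e) *: 1%:M.
  rewrite ev_lZ hZ scalerA -scalerDl; congr (_ *: _).
  ring.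
have sX : (P1 *m X <= P2)%MS.
  rewrite eq_row_base; apply/rfixU2P => p hp.
  by rewrite -mulmxA (ev_fix _ oddl_lx _ nf_I1) //.
have sXs : (P2 *m Xs <= P1)%MS.
  rewrite eq_row_base; apply/rfixU1P => p hp.
  by rewrite -mulmxA (ev_fix _ oddl_lxs _ nf_I2) //.
have e1 : P1 *m X *m Xs = lam *: P1.
  rewrite -mulmxA /X /Xs ev_mul // (ev_eq _ nf_I0) -ev_mul // eZ mulmxA.
  by rewrite /lE1 ev_const // scalemx1 mul_mx_scalar scalerA mulrC.
have e2 : P2 *m Xs *m X = lam *: P2.
  rewrite -mulmxA /X /Xs ev_mul // (ev_eq _ nf_I3) -ev_mul // eZ mulmxA.
  by rewrite /lE2 ev_const // scalemx1 mul_mx_scalar scalerA mulrC.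
have eB : B *m X^T = Xs *m B by apply: ev_adj.
have G0 : \det (P2 *m B *m P2^T) != 0.
  apply: (@nondeg _ _ P2 B (ev lE2) 4) => //.
  - rewrite eq_row_base; apply/rfixU2P => p hp.
    by rewrite (ev_fix _ oddl_lE2 _ nf_I4).
  - by rewrite /lE2 ev_const.
  - by rewrite ev_adj // (ev_eq _ nf_I4s).
have [_ [q [q0 hq]]] := gram (s := 4^-1) f1 f2 l0 isT sX sXs e1 e2 eB G0.
exists q; split => //.
by rewrite /C_Theta /C_factor /= card_U1 card_U2.
Qed.

End Final.

Lemma four_ne (n : nat) : (n%:R : algC) = 4 -> (n%:R : algC) = -4 -> False.
Proof.
move=> h1 h2; move: h2; rewrite h1 => /eqP; rewrite -addr_eq0.
by rewrite -natrD pnatr_eq0.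
Qed.

Theorem mainTheorem15 (n : nat) (rho : mx_representation rat G n) (B : 'M[rat]_n) :
  mx_irreducible rho ->
  B \in unitmx ->
  G_invariant_pairing rho B ->
  (iso_I rho -> sq_class_eq (C_Theta rho B) 2%:R%R) /\
  (~ iso_I rho -> sq_class_eq (C_Theta rho B) 1%R).
Proof.
move=> irr Bu hB.
have rz : rho z = R rho 1 4 by [].
case: (Zsign irr) => hZ.
- have hZe : R rho 1 4 = 1 *: 1%:M by rewrite scale1r.
  have [q [q0 hq]] := C_gram Bu hB hZe isT.
  split.
    case=> chi [lin ff E]; exfalso.
    have h1 := congr1 (fun f : 'CF(G) => f 1%g) E.
    have hz := congr1 (fun f : 'CF(G) => f z) E.
    rewrite /= crE ?group1 // repr_mx1 mxtrace1 ratr_nat Ind_1 // in h1.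
    rewrite /= crE ?zG // rz hZ mxtrace1 ratr_nat Ind_z // in hz.
    exact: four_ne h1 hz.
  move=> _; exists (8 ^+ \rank (rfix_mx rho U1) * q); split.
    by rewrite mulf_neq0 // expf_neq0.
  rewrite hq mul1r (_ : 4 * (24 - 8 * 1) = (8 : rat) ^+ 2) //.
  by rewrite -exprM mulnC exprM -exprMn.
- have hZe : R rho 1 4 = (-1) *: 1%:M by rewrite scaleN1r.
  have [n_4 d_1] := n4 hZ irr.
  have [q [q0 hq]] := C_gram Bu hB hZe isT.
  split.
    move=> _; exists (8 * q); split; first by rewrite mulf_neq0.
    by rewrite hq d_1 expr1; ring.
  move=> nI; exfalso; apply: nI.
  have [chi [lin ff]] := exists_chi; exists chi; split => //.
  apply/cfunP => g.
  have [gG | ngG] := boolP (g \in G); last by rewrite !cfun0.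
  case/G_T: gG => a [b [oa la lb ->]].
  have [h | h] := boolP ((a == 1%N) && ((b == 0%N) || (b == 4%N))).
    case/andP: h => /eqP -> /orP[]/eqP ->.
      by rewrite T10 crE // repr_mx1 mxtrace1 ratr_nat Ind_1 // n_4.
    rewrite -/z crE ?zG // rz hZ -scaleN1r mxtraceZ mxtrace1 mulN1r rmorphN rmorph_nat Ind_z //.
    by rewrite n_4.
  have hI : forall g, g \in G -> 'Ind[G] chi (g * z)%g = - 'Ind[G] chi g.
    by move=> g' g'G; apply: Ind_gz.
  have hC : forall g, g \in G -> cfRepr (map_repr ratr rho) (g * z)%g =
                                  - cfRepr (map_repr ratr rho) g.
    move=> g' g'G; rewrite !crE ?groupM ?zG // repr_mxM ?zG // rz hZ mulmxN mulmx1.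
    by rewrite linearN rmorphN.
  by rewrite (class_vanish hI oa la lb h) (class_vanish hC oa la lb h).
Qed.
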